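(* Let $(n_0^{(m)},n_1^{(m)})_{m\ge 1}$ be a sequence of pairs of integers with $2\le n_0^{(m)}\le n_1^{(m)}$, $n_1^{(m)}\to\infty$, and $n_0^{(m)}=(\log n_1^{(m)})^{\omega(1)}$, i.e. $\frac{\log n_0^{(m)}}{\log\log n_1^{(m)}}\to\infty$ as $m\to\infty$. Writing $n_0=n_0^{(m)}$, $n_1=n_1^{(m)}$, let $k=\frac{\log n_1}{\log n_0}$ and let $x_0$ be the unique root of the equation $x-1-x^{\frac{k-1}{k}}=0$ in the interval $[1,\infty)$. Then $$ch(K_{n_0,n_1})=(1+o(1))\frac{\log n_1}{\log x_0},$$ i.e. $ch(K_{n_0,n_1})\big/\frac{\log n_1}{\log x_0}\to 1$ as $m\to\infty$.
   Context: All logarithms are to base 2. For a graph $G=(V,E)$, the choice number $ch(G)$ is the minimum integer $k$ such that for every assignment of a list $S(v)$ of at least $k$ colors to each vertex $v\in V$, there is a proper vertex coloring of $G$ assigning to each vertex $v$ a color from $S(v)$. $K_{n_0,n_1}$ denotes the complete bipartite graph with parts of sizes $n_0$ and $n_1$. *)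

(* Defs.v *)
From mathcomp Require Import all_boot.
From Stdlib Require Import Reals ClassicalEpsilon.
Set Implicit Arguments. Unset Strict Implicit. Unset Printing Implicit Defensive.

(* A graph is an edge relation e on a finite vertex type V.
   Colours are natural numbers (any finite colour palette injects into nat). *)
Definition choosable (V : finType) (e : rel V) (k : nat) : Prop :=
  forall S : V -> seq nat,
    (forall v, k <= size (undup (S v))) ->
    exists c : V -> nat,
      (forall v, c v \in S v) /\ (forall u v, e u v -> c u <> c v).

Definition is_choice_number (V : finType) (e : rel V) (k : nat) : Prop :=
  choosable e k /\ forall k', choosable e k' -> k <= k'.

Definition ch (V : finType) (e : rel V) : nat :=
  epsilon (inhabits 0) (is_choice_number e).

Definition Kbip (n0 n1 : nat) : rel ('I_n0 + 'I_n1)%type :=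
  fun u v => match u, v with
             | inl _, inr _ => true
             | inr _, inl _ => true
             | _, _ => false
             end.

Definition log2 (x : R) : R := (ln x / ln 2)%R.
Arguments Kbip n0 n1 : clear implicits.

(* Main.v *)
Require Import Defs.
Set Warnings "-notation-overridden".
From Stdlib Require Import Reals Lra Lia ClassicalEpsilon Wf_nat Classical.
From mathcomp Require Import all_boot zify.
Set Implicit Arguments. Unset Strict Implicit. Unset Printing Implicit Defensive.

Lemma card_bigcup_leq (I X : finType) (B : I -> {set X}) :
  #|\bigcup_i B i| <= \sum_i #|B i|.
Proof.
elim/big_rec2: _ => [|i n U _ IH]; first by rewrite cards0.
apply: leq_trans (leq_card_setU _ _).1 _; by rewrite leq_add2l.
Qed.

Lemma card_fam (I : finType) b (X : {set I}) (Q : pred 'I_b) :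
  #|(family (fun i : I => if i \in X then Q else predT) : simpl_pred {ffun I -> 'I_b})|
  = #|Q| ^ #|X| * b ^ (#|I| - #|X|).
Proof.
rewrite card_family foldrE big_map big_enum /= (bigID (mem X)) /=.
rewrite [X in X * _](eq_bigr (fun _ => #|Q|)); last by move=> i ->.
rewrite [X in _ * X](eq_bigr (fun _ => b)); last first.
  by move=> i Hi; rewrite (negbTE Hi) card_ord.
rewrite !prod_nat_const; congr (_ * _ ^ _).
rewrite -(cardsC X) addKn; apply: eq_card => i; by rewrite !inE.
Qed.

Lemma leq_powb m n e : m <= n -> m ^ e <= n ^ e.
Proof. by move=> mn; elim: e => // e IH; rewrite !expnS leq_mul. Qed.

Lemma pow_mono_bound c b s x n : c <= b -> s <= x -> x <= n ->
  c ^ x * b ^ (n - x) <= c ^ s * b ^ (n - s).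
Proof.
move=> cb sx xn.
have -> : n - s = (x - s) + (n - x) by lia.
rewrite -{1}(subnKC sx) !expnD -!mulnA leq_mul //.
by rewrite leq_mul // leq_powb.
Qed.

Lemma card_lt_ord b a : a <= b -> #|[pred j : 'I_b | j < a]| = a.
Proof.
move=> ab.
have -> : #|[pred j : 'I_b | j < a]| = #|[set widen_ord ab i | i : 'I_a]|.
  apply: eq_card => j; rewrite !inE /=; apply/idP/imsetP.
    by move=> ja; exists (Ordinal ja) => //; apply: val_inj.
  by case=> i _ ->; rewrite /= ltn_ord.
rewrite card_imset ?card_ord //; by move=> x y /(congr1 val) /= /val_inj.
Qed.

Lemma card_ge_ord b a : a <= b -> #|[pred j : 'I_b | a <= j]| = b - a.
Proof.
move=> ab; have H := cardC [pred j : 'I_b | j < a].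
rewrite card_lt_ord // card_ord in H.
have -> : #|[pred j : 'I_b | a <= j]| = #|[predC [pred j : 'I_b | j < a]]|.
  apply: eq_card => j; by rewrite !inE /= leqNgt.
by apply/eqP; rewrite -(eqn_add2l a) subnKC // H.
Qed.

Lemma ub_comb n0 n1 s a b : 0 < b -> a <= b ->
  n0 * (b - a) ^ s + n1 * a ^ s < b ^ s -> choosable (Kbip n0 n1) s.
Proof.
move=> b0 ab Hlt S HS.
pose K := \max_(v : 'I_n0 + 'I_n1) \max_(x <- S v) x.
pose n := (K + s).+1.
have HK : forall v x, x \in S v -> x < n.
  move=> v x xS; rewrite ltnS; apply: leq_trans (leq_addr s K).
  apply: leq_trans (leq_bigmax v); exact: (leq_bigmax_seq x xS isT).
have vi : forall x, x < n -> val (inord x : 'I_n) = x.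
  by move=> x h; exact: inordK h.
pose inW (f : {ffun 'I_n -> 'I_b}) (x : nat) := (f (inord x) < a).
pose bad f (v : 'I_n0 + 'I_n1) := match v with
  | inl _ => all (fun x => ~~ inW f x) (S v)
  | inr _ => all (inW f) (S v) end.
have Hex : exists f, forall v, ~~ bad f v.
  have Hv : forall v, #|[set f | bad f v]| <=
      (match v with inl _ => (b - a) ^ s | inr _ => a ^ s end) * b ^ (n - s).
    move=> v; pose X := [set i : 'I_n | val i \in S v].
    have HX : s <= #|X|.
      apply: leq_trans (HS v) _; rewrite cardE -(size_map val).
      apply: uniq_leq_size; first exact: undup_uniq.
      move=> x; rewrite mem_undup => xS; apply/mapP; exists (inord x).
        by rewrite mem_enum inE vi //; exact: HK xS.
      by rewrite vi //; exact: HK xS.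
    have HXn : #|X| <= n by have := max_card (mem X); rewrite card_ord.
    case: v => [x|x] in X HX HXn *.
      apply: leq_trans (_ : #|(family (fun i => if i \in X then ([pred j : 'I_b | a <= j] : pred 'I_b) else predT) : simpl_pred {ffun 'I_n -> 'I_b})| <= _).
        apply: subset_leq_card; apply/subsetP => f; rewrite inE => Hb.
        apply/familyP => i; case: ifP => // iX; rewrite inE in iX.
        by have := allP Hb _ iX; rewrite /inW inord_val inE /= -leqNgt.
      rewrite card_fam (card_ge_ord ab) card_ord; apply: pow_mono_bound => //; exact: leq_subr.
    apply: leq_trans (_ : #|(family (fun i => if i \in X then ([pred j : 'I_b | j < a] : pred 'I_b) else predT) : simpl_pred {ffun 'I_n -> 'I_b})| <= _).
      apply: subset_leq_card; apply/subsetP => f; rewrite inE => Hb.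
      apply/familyP => i; case: ifP => // iX; rewrite inE in iX.
      by have := allP Hb _ iX; rewrite /inW inord_val inE /=.
    rewrite card_fam (card_lt_ord ab) card_ord; exact: pow_mono_bound.
  have Hsn : s <= n by rewrite /n; lia.
  have Hsum : #|\bigcup_v [set f | bad f v]| < #|{ffun 'I_n -> 'I_b}|.
    apply: leq_ltn_trans (card_bigcup_leq _) _.
    apply: (leq_ltn_trans (@leq_sum _ _ _ _ (fun v => (match v with inl _ => (b - a) ^ s | inr _ => a ^ s end) * b ^ (n - s)) (fun v _ => Hv v))).
    rewrite big_sumType /= card_ffun !card_ord.
    rewrite !big_const_ord !iter_addn_0.
    have -> : b ^ n = b ^ s * b ^ (n - s) by rewrite -expnD subnKC.
    rewrite -!mulnA ![b ^ (n - s) * _]mulnC !mulnA -mulnDl ltn_mul2r expn_gt0 b0 /=.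
    by rewrite ![_ ^ s * _]mulnC.
  have : ~~ ([set: {ffun 'I_n -> 'I_b}] \subset \bigcup_v [set f | bad f v]).
    apply: contraTN Hsum => /subset_leq_card; by rewrite cardsT -leqNgt.
  case/subsetPn => f _ Hf; exists f => v; apply: contra Hf => Hb.
  by apply/bigcupP; exists v => //; rewrite inE.
case: Hex => f Hf.
pose P (v : 'I_n0 + 'I_n1) := match v with
  | inl _ => inW f | inr _ => fun x => ~~ inW f x end.
have HP : forall v, has (P v) (S v).
  move=> [x|x]; apply/hasP.
    have := Hf (inl x); rewrite /= => /allPn [y yS Hy]; exists y => //.
    by rewrite negbK in Hy.
  have := Hf (inr x); rewrite /= => /allPn [y yS Hy]; by exists y.
exists (fun v => nth 0 (S v) (find (P v) (S v))); split.
  by move=> v; apply: mem_nth; rewrite -has_find; exact: HP.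
move=> [u|u] [v|v] //= _ Heq.
  have := nth_find 0 (HP (inl u)); have := nth_find 0 (HP (inr v)).
  by rewrite /= Heq => /negP.
have := nth_find 0 (HP (inl v)); have := nth_find 0 (HP (inr u)).
by rewrite /= Heq => /negP.
Qed.


Lemma card_sets_all (T : finType) : #|{set T}| = 2 ^ #|T|.
Proof. by rewrite -[in LHS]cardsT -powersetT card_powerset cardsT. Qed.

Lemma cardCsub (T : finType) (A : pred T) : #|[predC A]| = #|T| - #|A|.
Proof. by rewrite -(cardC A) addKn. Qed.

Section LBC.
Variables (N s : nat).
Definition Tsub := {X : {set 'I_N} | #|X| == s}.

Lemma card_Tsub_sub (B : {set 'I_N}) :
  #|[set X : Tsub | val X \subset B]| = 'C(#|B|, s).
Proof.
rewrite -cards_draws -(card_imset _ val_inj); apply: eq_card => Y.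
rewrite !inE; apply/imsetP/andP.
  by case=> X; rewrite inE => XB ->; split => //; exact: (valP X).
case=> YB Ys; exists (exist _ Y Ys) => //; by rewrite inE.
Qed.

Lemma card_Tsub : #|{: Tsub}| = 'C(N, s).
Proof. by rewrite card_sig -[N in 'C(N, _)](card_ord N) -card_draws cardsE. Qed.

Lemma card_Tsub_meet (U : {set 'I_N}) :
  #|[pred X : Tsub | val X :&: U != set0]| = 'C(N, s) - 'C(N - #|U|, s).
Proof.
have H := cardC [pred X : Tsub | val X :&: U == set0].
have E : #|[pred X : Tsub | val X :&: U == set0]| = 'C(N - #|U|, s).
  rewrite -[N in N - _](card_ord N) -(cardsC U) addKn -card_Tsub_sub.
  by apply: eq_card => X; rewrite !inE setI_eq0 disjoints_subset.
have -> : #|[pred X : Tsub | val X :&: U != set0]| =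
          #|[predC [pred X : Tsub | val X :&: U == set0]]| by apply: eq_card.
by rewrite cardCsub E card_Tsub.
Qed.

Lemma card_Tsub_nsub (U : {set 'I_N}) :
  #|[pred X : Tsub | ~~ (val X \subset U)]| = 'C(N, s) - 'C(#|U|, s).
Proof.
have H := cardC [pred X : Tsub | val X \subset U].
have E : #|[pred X : Tsub | val X \subset U]| = 'C(#|U|, s).
  rewrite -card_Tsub_sub; by apply: eq_card => X; rewrite !inE.
have -> : #|[pred X : Tsub | ~~ (val X \subset U)]| =
          #|[predC [pred X : Tsub | val X \subset U]]| by apply: eq_card.
by rewrite cardCsub E card_Tsub.
Qed.
End LBC.



Lemma lb_comb n0 n1 s N : 0 < n0 ->
  (forall j, j <= N -> 2 ^ N * (('C(N, s) - 'C(N - j, s)) ^ n0 * ('C(N, s) - 'C(j, s)) ^ n1)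
                        < 'C(N, s) ^ (n0 + n1)) ->
  ~ choosable (Kbip n0 n1) s.
Proof.
move=> n0p Hj Hch.
pose M := 'C(N, s).
pose CT := ({ffun 'I_n0 -> Tsub N s} * {ffun 'I_n1 -> Tsub N s})%type.
pose bad (U : {set 'I_N}) := [set fg : CT | [forall a, val (fg.1 a) :&: U != set0]
                                && [forall b, ~~ (val (fg.2 b) \subset U)]].
have Hbad : forall U, #|bad U| = (M - 'C(N - #|U|, s)) ^ n0 * (M - 'C(#|U|, s)) ^ n1.
  move=> U.
  have -> : bad U = setX
     [set f : {ffun 'I_n0 -> Tsub N s} | f \in ffun_on [pred X : Tsub N s | val X :&: U != set0]]
     [set g : {ffun 'I_n1 -> Tsub N s} | g \in ffun_on [pred X : Tsub N s | ~~ (val X \subset U)]].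
    apply/setP => [[f g]]; rewrite !inE /=; congr (_ && _).
  rewrite cardsX !cardsE !card_ffun_on card_Tsub_meet card_Tsub_nsub !card_ord.
  done.
have HM : 0 < M ^ (n0 + n1) by apply: leq_ltn_trans (Hj 0 (leq0n N)).
have Hsum : #|\bigcup_U bad U| < #|{: CT}|.
  apply: leq_ltn_trans (card_bigcup_leq _) _.
  rewrite card_prod !card_ffun !card_Tsub !card_ord -expnD.
  have p2 : 0 < 2 ^ N by rewrite expn_gt0.
  rewrite -(ltn_pmul2l p2) big_distrr /=.
  apply: (@leq_ltn_trans (\sum_(U : {set 'I_N}) (M ^ (n0 + n1)).-1)).
    apply: leq_sum => U _; rewrite Hbad -ltnS prednK //; apply: Hj.
    by have := max_card (mem U); rewrite card_ord.
  rewrite big_const iter_addn_0 card_sets_all card_ord mulnC ltn_pmul2l //.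
  by rewrite prednK.
have : ~~ ([set: CT] \subset \bigcup_U bad U).
  apply: contraTN Hsum => /subset_leq_card; by rewrite cardsT -leqNgt.
case/subsetPn => fg _ Hfg.
pose S (v : 'I_n0 + 'I_n1) : seq nat := match v with
  | inl a => map (@nat_of_ord N) (enum (val (fg.1 a)))
  | inr b => map (@nat_of_ord N) (enum (val (fg.2 b))) end.
have HS : forall v, s <= size (undup (S v)).
  move=> [a|b]; rewrite /S undup_id.
  - by rewrite size_map -cardE (eqP (valP (fg.1 a))).
  - by rewrite (map_inj_uniq val_inj) enum_uniq.
  - by rewrite size_map -cardE (eqP (valP (fg.2 b))).
  - by rewrite (map_inj_uniq val_inj) enum_uniq.
have [c [Hc1 Hc2]] := Hch S HS.
pose U := [set i : 'I_N | [exists a, c (inl a) == val i]].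
apply: (negP Hfg); apply/bigcupP; exists U => //; rewrite inE; apply/andP; split.
  apply/forallP => a; have := Hc1 (inl a); rewrite /= => /mapP [i iX ci].
  rewrite mem_enum in iX; apply/set0Pn; exists i; rewrite !inE iX /=.
  by apply/existsP; exists a; rewrite ci.
apply/forallP => b; have := Hc1 (inr b); rewrite /= => /mapP [i iX ci].
rewrite mem_enum in iX.
apply/negP => /subsetP /(_ i iX); rewrite inE => /existsP [a /eqP ca].
by apply: (Hc2 (inl a) (inr b)) => //; rewrite ca ci.
Qed.


Open Scope R_scope.
Unset Implicit Arguments.

Lemma exp_pow_nat x n : exp x ^ n = exp (INR n * x).
Proof.
induction n as [|n IH]; [simpl; rewrite Rmult_0_l exp_0; ring|].
rewrite S_INR. simpl pow. rewrite IH. replace ((INR n + 1) * x) with (x + INR n * x) by ring.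
rewrite exp_plus; ring.
Qed.

Lemma exp_le_1p2t t : 0 <= t -> t <= 1/2 -> exp t <= 1 + 2*t.
Proof.
intros h0 h1. pose proof (exp_ineq1_le (-t)) as H.
assert (E : exp t * exp (-t) = 1) by (rewrite -exp_plus; replace (t + - t) with 0 by ring; apply exp_0).
pose proof (exp_pos t). nra.
Qed.

Lemma ln2_bounds : /2 < ln 2 < 1.
Proof.
split; [apply ln_lt_2|]. rewrite -(ln_exp 1). apply ln_increasing; [lra|].
pose proof (exp_ineq1 1). lra.
Qed.

Section X0.
Variables l L z : R.
Hypotheses (hl : 0 < l) (hlL : l <= L) (hz : 0 < z)
  (heq : exp (- z) + exp (- (z * l / L)) = 1).

Let w := z * l / L.

Lemma hL : 0 < L. Proof. lra. Qed.

Lemma w_pos : 0 < w.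
Proof. unfold w. pose proof hL. apply Rdiv_lt_0_compat; nra. Qed.

Lemma w_le_z : w <= z.
Proof.
unfold w. pose proof hL. apply Rmult_le_reg_r with L; [lra|].
unfold Rdiv. rewrite Rmult_assoc Rinv_l; [nra|lra].
Qed.

Lemma expzmz : exp z * exp (- z) = 1.
Proof. rewrite -exp_plus. replace (z + - z) with 0 by ring. apply exp_0. Qed.

Lemma expwmw : exp w * exp (- w) = 1.
Proof. rewrite -exp_plus. replace (w + - w) with 0 by ring. apply exp_0. Qed.

Lemma expz_ge2 : 2 <= exp z.
Proof.
pose proof w_le_z. assert (exp (- z) <= exp (- w)).
{ destruct (Req_dec w z) as [->|]; [lra|]. left; apply exp_increasing; lra. }
fold w in heq. pose proof expzmz. pose proof (exp_pos (-z)). nra.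
Qed.

Lemma emz_le_w : exp (- z) <= w.
Proof. fold w in heq. pose proof (exp_ineq1_le (- w)). lra. Qed.

Lemma w_expz : w * (exp z - 1) <= 1.
Proof.
fold w in heq. pose proof (exp_ineq1_le w). pose proof expzmz. pose proof expwmw.
pose proof (exp_pos z). pose proof (exp_pos (-w)). pose proof w_pos.
assert (K1 : (1 + w) * exp (- w) <= 1) by nra.
assert (K2 : exp (- w) = 1 - exp (- z)) by lra. rewrite K2 in K1.
nra.
Qed.

Lemma z_gt_half : / 2 < z.
Proof.
pose proof expz_ge2. pose proof ln2_bounds.
assert (ln 2 <= z). { rewrite -(ln_exp z). destruct (Req_dec (exp z) 2) as [->|]; [lra|].
  left; apply ln_increasing; lra. }
lra.
Qed.

Lemma expz_le : exp z <= 3 * L / l.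
Proof.
pose proof w_expz. pose proof z_gt_half. pose proof hL. unfold w in H.
assert (HX : (exp z - 1) * (z * l) <= L).
{ apply Rmult_le_reg_r with (/ L); [apply Rinv_0_lt_compat; lra|].
  rewrite Rinv_r; [|lra]. unfold Rdiv in H. nra. }
assert (HY : (exp z - 1) * l <= 2 * L).
{ pose proof expz_ge2. nra. }
apply Rmult_le_reg_r with l; [lra|]. unfold Rdiv. rewrite Rmult_assoc Rinv_l; [nra|lra].
Qed.

End X0.

Lemma exp_mono a b : a <= b -> exp a <= exp b.
Proof. intros h. destruct (Req_dec a b) as [->|]; [lra|]. left; apply exp_increasing; lra. Qed.

Lemma exp_inv_r a : exp a * exp (- a) = 1.
Proof. rewrite -exp_plus. replace (a + - a) with 0 by ring. apply exp_0. Qed.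

Lemma ub_analytic l L z eps s :
  0 < l -> l <= L -> 0 < z -> exp (- z) + exp (- (z * l / L)) = 1 ->
  0 < eps <= 1 -> 2 <= s -> (1 + eps) * (L / z) <= s -> 6 < eps * l ->
  1 < exp (- (ln 2 / s)) * (exp (- (L / s)) + exp (- (l / s))).
Proof.
intros hl hlL hz heq he hs hsR hel.
pose proof (hL l L hl hlL) as hL0.
set (w := z * l / L).
assert (HLs : L / s <= z / (1 + eps)).
{ unfold Rdiv. apply Rmult_le_reg_r with (s * (1 + eps)); [nra|].
  replace (L * / s * (s * (1 + eps))) with (L * (1 + eps)) by (field; lra).
  replace (z * / (1 + eps) * (s * (1 + eps))) with (z * s) by (field; lra).
  unfold Rdiv in hsR. apply Rmult_le_compat_l with (r := z) in hsR; [|lra].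
  replace (z * ((1 + eps) * (L * / z))) with (L * (1 + eps)) in hsR by (field; lra). lra. }
assert (Hls : l / s <= w / (1 + eps)).
{ unfold w. replace (l / s) with ((L / s) * (l / L)) by (field; lra).
  replace (z * l / L / (1 + eps)) with ((z / (1 + eps)) * (l / L)) by (field; lra).
  apply Rmult_le_compat_r; [apply Rlt_le, Rdiv_lt_0_compat; lra| exact HLs]. }
assert (E1 : exp (- z) * (1 + z * eps / (1 + eps)) <= exp (- (L / s))).
{ apply Rle_trans with (exp (- z) * exp (z * eps / (1 + eps))).
  - apply Rmult_le_compat_l; [apply Rlt_le, exp_pos| apply exp_ineq1_le].
  - rewrite -exp_plus. apply exp_mono.
    replace (- z + z * eps / (1 + eps)) with (- (z / (1 + eps))) by (field; lra). lra. }
assert (E2 : exp (- w) <= exp (- (l / s))).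
{ apply exp_mono. assert (w / (1 + eps) <= w).
  { pose proof (w_pos l L z hl hlL hz) as hw. fold w in hw.
    unfold Rdiv. apply Rmult_le_reg_r with (1 + eps); [lra|].
    rewrite Rmult_assoc Rinv_l; nra. }
  lra. }
fold w in heq.
assert (Hsum : 1 + exp (- z) * (z * eps / (1 + eps)) <= exp (- (L / s)) + exp (- (l / s))) by nra.
set (t := ln 2 / s).
pose proof ln2_bounds as Hl2.
assert (ht0 : 0 <= t) by (unfold t; apply Rlt_le, Rdiv_lt_0_compat; lra).
assert (ht1 : t <= 1/2).
{ unfold t. unfold Rdiv. apply Rmult_le_reg_r with s; [lra|].
  rewrite Rmult_assoc Rinv_l; lra. }
pose proof (exp_le_1p2t t ht0 ht1) as Het.
pose proof (expz_le l L z hl hlL hz heq) as Hez.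
pose proof (exp_inv_r z) as Ez.
assert (Hkey : 2 * t < exp (- z) * (z * eps / (1 + eps))).
{
  assert (Hsz : (1 + eps) * L <= s * z).
  { unfold Rdiv in hsR. apply Rmult_le_compat_r with (r := z) in hsR; [|lra].
    replace ((1 + eps) * (L * / z) * z) with ((1 + eps) * L) in hsR by (field; lra). lra. }
  assert (H6 : 2 * ln 2 * exp z < eps * L).
  { apply Rle_lt_trans with (2 * ln 2 * (3 * L / l)).
    - apply Rmult_le_compat_l; lra.
    - replace (2 * ln 2 * (3 * L / l)) with ((6 * ln 2) * (L / l)) by (field; lra).
      replace (eps * L) with ((eps * l) * (L / l)) by (field; lra).
      apply Rmult_lt_compat_r; [apply Rdiv_lt_0_compat; lra| lra]. }
  assert (H7 : 2 * ln 2 < eps * L * exp (- z)).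
  { pose proof (exp_pos (- z)). nra. }
  unfold t. apply Rmult_lt_reg_r with (s * (1 + eps)); [nra|].
  replace (2 * (ln 2 / s) * (s * (1 + eps))) with (2 * ln 2 * (1 + eps)) by (field; lra).
  replace (exp (- z) * (z * eps / (1 + eps)) * (s * (1 + eps))) with (exp (- z) * eps * (s * z)) by (field; lra).
  pose proof (exp_pos (- z)).
  assert (exp (- z) * eps * ((1 + eps) * L) <= exp (- z) * eps * (s * z))
    by (apply Rmult_le_compat_l; nra).
  assert (2 * ln 2 * (1 + eps) < eps * L * exp (- z) * (1 + eps))
    by (apply Rmult_lt_compat_r; lra).
  nra. }
pose proof (exp_inv_r t) as Et. pose proof (exp_pos t). pose proof (exp_pos (- t)).
nra.
Qed.

Lemma ln_mono x y : 0 < x -> x <= y -> ln x <= ln y.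
Proof. intros h1 h2. destruct (Req_dec x y) as [->|]; [lra|]. left; apply ln_increasing; lra. Qed.

Lemma nat_floor x : 0 <= x -> exists n : nat, INR n <= x < INR n + 1.
Proof.
intros hx. destruct (archimed x) as [h1 h2].
assert (hz : (0 < up x)%Z) by (apply lt_IZR; lra).
exists (Z.to_nat (up x - 1)). rewrite INR_IZR_INZ Znat.Z2Nat.id; last lia.
rewrite minus_IZR. simpl (IZR 1). lra.
Qed.

Lemma nat_ceil x : 0 <= x -> exists n : nat, x < INR n <= x + 1.
Proof.
intros hx. destruct (nat_floor x hx) as [n [h1 h2]]. exists (S n). rewrite S_INR. lra.
Qed.

Lemma lb_analytic l L z eps s :
  0 < l -> l <= L -> 0 < z -> exp (- z) + exp (- (z * l / L)) = 1 ->
  0 < eps <= 1/2 -> 1 <= L -> 1 <= s -> s <= (1 - eps) * (L / z) ->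
  (1 - eps) * (L / z) - 1 <= s ->
  1 + 2 * ln (146 / eps) + 4 * ln L <= eps * l ->
  exists N : nat, 1 <= INR N /\
    exp ((ln (2 * INR N) - L) / s) + exp ((ln (2 * INR N) - l) / s) + 2 * s / INR N <= 1.
Proof.
intros hl hlL hz heq he hL1 hs1 hsu hsl hbig.
pose proof (hL l L hl hlL) as hL0.
set (w := z * l / L).
pose proof (w_pos l L z hl hlL hz) as hw. fold w in hw.
pose proof (w_le_z l L z hl hlL hz) as hwz. fold w in hwz.
pose proof (expz_ge2 l L z hl hlL hz heq) as hez2.
pose proof (emz_le_w l L z heq) as hemz. fold w in hemz.
pose proof (w_expz l L z hl hlL hz heq) as hwe. fold w in hwe.
pose proof (z_gt_half l L z hl hlL hz heq) as hzh.
pose proof (expz_le l L z hl hlL hz heq) as hezl.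
fold w in heq.
set (c1 := eps / (1 - eps)).
assert (hc1a : eps <= c1).
{ unfold c1. unfold Rdiv. apply Rmult_le_reg_r with (1 - eps); [lra|].
  rewrite Rmult_assoc Rinv_l; nra. }
assert (hc1b : c1 <= 1).
{ unfold c1. unfold Rdiv. apply Rmult_le_reg_r with (1 - eps); [lra|].
  rewrite Rmult_assoc Rinv_l; nra. }
assert (hw1 : w <= 1) by nra.
set (eta := c1 * w).
assert (heta0 : 0 < eta) by (unfold eta; nra).
assert (heta1 : eta <= 1) by (unfold eta; nra).
assert (hetae : eps * exp (- z) <= eta).
{ unfold eta. pose proof (exp_pos (- z)). nra. }
assert (hLz : (1 - eps) * (L / z) * (z + c1 * z) = L).
{ unfold c1. field. lra. }
assert (hLs : z + c1 * z <= L / s).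
{ apply Rmult_le_reg_r with s; [lra|]. unfold Rdiv. rewrite Rmult_assoc Rinv_l; [|lra].
  rewrite Rmult_1_r. rewrite -{1}hLz.
  assert (0 <= z + c1 * z) by nra. nra. }
assert (hls : w + eta <= l / s).
{ replace (l / s) with ((L / s) * (l / L)) by (field; lra).
  replace (w + eta) with ((z + c1 * z) * (l / L)) by (unfold eta, w; field; lra).
  apply Rmult_le_compat_r; [apply Rlt_le, Rdiv_lt_0_compat; lra | exact hLs]. }
assert (hLs2 : z + eta <= L / s).
{ unfold eta. nra. }
assert (hx0 : 0 <= 2 * s * (2 + eta) / eta).
{ apply Rlt_le, Rdiv_lt_0_compat; nra. }
destruct (nat_ceil _ hx0) as [N [hN1 hN2]].
assert (hN0 : 2 * s * (2 + eta) / eta >= 1).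
{ apply Rle_ge. apply Rmult_le_reg_r with eta; [lra|]. unfold Rdiv.
  rewrite Rmult_assoc Rinv_l; nra. }
exists N. split; [lra|].
set (K := ln (2 * INR N) / s).
assert (HA : exp ((ln (2 * INR N) - L) / s) <= exp (K - eta) * exp (- z)).
{ rewrite -exp_plus. apply exp_mono. unfold K.
  replace ((ln (2 * INR N) - L) / s) with (ln (2 * INR N) / s - L / s) by (field; lra). lra. }
assert (HB : exp ((ln (2 * INR N) - l) / s) <= exp (K - eta) * exp (- w)).
{ rewrite -exp_plus. apply exp_mono. unfold K.
  replace ((ln (2 * INR N) - l) / s) with (ln (2 * INR N) / s - l / s) by (field; lra). lra. }
assert (hseta : eps * l - 1 <= s * eta).
{ assert (E : ((1 - eps) * (L / z) - 1) * eta = eps * l - eta).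
  { unfold eta, c1, w. field. lra. }
  assert (((1 - eps) * (L / z) - 1) * eta <= s * eta) by (apply Rmult_le_compat_r; lra).
  lra. }
assert (h2N : 2 * INR N <= 38 / eps * (L * L)).
{ (* 2N <= 2 (2 s (2+eta)/eta + 1) <= 12 s / eta + 2 *)
  assert (hsL : s <= 2 * L).
  { apply Rle_trans with ((1 - eps) * (L / z)); [exact hsu|].
    assert (L / z <= 2 * L).
    { unfold Rdiv. apply Rmult_le_reg_r with z; [lra|].
      rewrite Rmult_assoc Rinv_l; nra. }
    assert (0 <= L / z) by (apply Rlt_le, Rdiv_lt_0_compat; lra). nra. }
  assert (hl2 : 2 <= l).
  { assert (0 <= ln (146 / eps)).
    { rewrite -ln_1. apply ln_mono; [lra|]. apply Rmult_le_reg_r with eps; [lra|].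
      unfold Rdiv. rewrite Rmult_assoc Rinv_l; lra. }
    assert (0 <= ln L) by (rewrite -ln_1; apply ln_mono; lra).
    nra. }
  assert (hinv : / eta <= 3 * L / (2 * eps)).
  { (* eta >= eps exp(-z) >= eps * l / (3 L) >= 2 eps / (3 L) *)
    assert (hemz2 : l / (3 * L) <= exp (- z)).
    { pose proof (exp_inv_r z) as Ez. pose proof (exp_pos z).
      apply Rmult_le_reg_r with (exp z); [lra|]. rewrite Rmult_comm in Ez.
      rewrite Ez. unfold Rdiv. apply Rmult_le_reg_r with (3 * L); [lra|].
      replace (l * / (3 * L) * exp z * (3 * L)) with (l * exp z) by (field; lra).
      unfold Rdiv in hezl.
      assert (HH1 : l * exp z <= l * (3 * L * / l)) by (apply Rmult_le_compat_l; lra).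
      replace (l * (3 * L * / l)) with (3 * L) in HH1 by (field; lra). lra. }
    assert (h2e : 2 * eps / (3 * L) <= eta).
    { apply Rle_trans with (eps * exp (- z)); [|exact hetae].
      apply Rle_trans with (eps * (l / (3 * L))); [|apply Rmult_le_compat_l; lra].
      unfold Rdiv. rewrite -Rmult_assoc. apply Rmult_le_compat_r.
      - apply Rlt_le, Rinv_0_lt_compat; lra.
      - nra. }
    replace (3 * L / (2 * eps)) with (/ (2 * eps / (3 * L))) by (field; lra).
    apply Rinv_le_contravar; [apply Rdiv_lt_0_compat; lra | exact h2e]. }
  assert (hN3 : INR N <= 2 * s * (2 + eta) / eta + 1) by lra.
  assert (hN4 : 2 * s * (2 + eta) / eta <= 6 * s * / eta).
  { unfold Rdiv. assert (0 < / eta) by (apply Rinv_0_lt_compat; lra). nra. }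
  assert (hN5 : 6 * s * / eta <= 6 * (2 * L) * (3 * L / (2 * eps))).
  { apply Rmult_le_compat; try nra; try (apply Rlt_le, Rinv_0_lt_compat; lra). }
  replace (6 * (2 * L) * (3 * L / (2 * eps))) with (18 * (L * L) / eps) in hN5 by (field; lra).
  assert (hLL : 1 <= L * L) by nra.
  assert (h1e : 2 <= 2 * (L * L) / eps).
  { apply Rmult_le_reg_r with eps; [lra|]. unfold Rdiv.
    rewrite Rmult_assoc Rinv_l; nra. }
  replace (38 / eps * (L * L)) with (36 * (L * L) / eps + 2 * (L * L) / eps) by (field; lra).
  replace (18 * (L * L) / eps) with (/2 * (36 * (L * L) / eps)) in hN5 by (field; lra).
  lra. }
assert (hlnN : ln (2 * INR N) <= ln (146 / eps) + 2 * ln L).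
{ apply Rle_trans with (ln (146 / eps * (L * L))).
  - apply ln_mono; [lra|]. apply Rle_trans with (38 / eps * (L * L)); [exact h2N|].
    apply Rmult_le_compat_r; [nra|]. unfold Rdiv. apply Rmult_le_compat_r; [|lra].
    apply Rlt_le, Rinv_0_lt_compat; lra.
  - have hpos : 0 < 146 / eps by apply Rdiv_lt_0_compat; lra.
    have hLL : 0 < L * L by nra.
    rewrite (ln_mult _ _ hpos hLL) (ln_mult _ _ hL0 hL0). lra. }
assert (hK : K <= eta / 2).
{ unfold K. unfold Rdiv. apply Rmult_le_reg_r with s; [lra|].
  rewrite Rmult_assoc Rinv_l; [|lra]. nra. }
assert (HC : exp (K - eta) <= exp (- (eta / 2))) by (apply exp_mono; lra).
assert (HD : exp (- (eta / 2)) * (1 + eta / 2) <= 1).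
{ pose proof (exp_ineq1_le (eta / 2)). pose proof (exp_inv_r (eta / 2)).
  pose proof (exp_pos (- (eta / 2))). nra. }
assert (HE : 2 * s / INR N <= eta / (2 + eta)).
{ assert (0 < INR N) by lra.
  unfold Rdiv. apply Rmult_le_reg_r with (INR N * (2 + eta)); [nra|].
  replace (2 * s * / INR N * (INR N * (2 + eta))) with (2 * s * (2 + eta)) by (field; lra).
  replace (eta * / (2 + eta) * (INR N * (2 + eta))) with (eta * INR N) by (field; lra).
  unfold Rdiv in hN1. apply Rmult_le_reg_r with (/ eta); [apply Rinv_0_lt_compat; lra|].
  replace (eta * INR N * / eta) with (INR N) by (field; lra). lra. }
pose proof (exp_pos (K - eta)).
assert (HF : exp (- (eta / 2)) + eta / (2 + eta) <= 1).
{ assert (exp (- (eta / 2)) <= 2 / (2 + eta)).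
  { unfold Rdiv. apply Rmult_le_reg_r with (2 + eta); [lra|].
    rewrite Rmult_assoc Rinv_l; lra. }
  replace 1 with (2 / (2 + eta) + eta / (2 + eta)) by (field; lra). lra. }
nra.
Qed.


Set Implicit Arguments.

Lemma INR_muln m n : INR (m * n)%N = INR m * INR n.
Proof. by rewrite -mult_INR. Qed.
Lemma INR_addn m n : INR (m + n)%N = INR m + INR n.
Proof. by rewrite -plus_INR. Qed.
Lemma INR_subn m n : (n <= m)%N -> INR (m - n)%N = INR m - INR n.
Proof. by move=> h; rewrite -minus_INR //; apply/leP. Qed.
Lemma INR_expn m n : INR (m ^ n)%N = INR m ^ n.
Proof. elim: n => [|n IH] //=; by rewrite expnS INR_muln IH. Qed.
Lemma INR_ltn m n : INR m < INR n -> (m < n)%N.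
Proof. by move=> h; apply/ltP; apply: INR_lt. Qed.
Lemma INR_leq m n : INR m <= INR n -> (m <= n)%N.
Proof. by move=> h; apply/leP; apply: INR_le. Qed.

Lemma pow_lt_strict x y n : 0 <= x < y -> (1 <= n)%N -> x ^ n < y ^ n.
Proof.
move=> [h0 h1]; elim: n => [//|n IH] _ /=.
case: n IH => [|n] IH; first by rewrite /= !Rmult_1_r.
have := IH isT; have := pow_le x n.+1 h0; have := pow_lt y n.+1 ltac:(lra) => *.
nra.
Qed.

Lemma ub_real n0 n1 (s : nat) : (1 <= n0)%N -> (1 <= n1)%N -> (1 <= s)%N ->
  1 < exp (- (ln 2 / INR s)) * (exp (- (ln (INR n1) / INR s)) + exp (- (ln (INR n0) / INR s))) ->
  choosable (Kbip n0 n1) s.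
Proof.
move=> h0 h1 hs H.
have hs' : 0 < INR s by apply: lt_0_INR; apply/ltP.
have hn0 : 1 <= INR n0 by apply: (le_INR 1); apply/leP.
have hn1 : 1 <= INR n1 by apply: (le_INR 1); apply/leP.
set t := ln 2 / INR s.
have ht : 0 < t by rewrite /t; have := ln2_bounds; move=> ?; apply: Rdiv_lt_0_compat; lra.
set p := exp (- t) * exp (- (ln (INR n1) / INR s)).
set w := exp (- t) * exp (- (ln (INR n0) / INR s)).
have hp0 : 0 < p by rewrite /p; have := exp_pos (- t); have := exp_pos (- (ln (INR n1) / INR s)); nra.
have hw0 : 0 < w by rewrite /w; have := exp_pos (- t); have := exp_pos (- (ln (INR n0) / INR s)); nra.
have hln1 : 0 <= ln (INR n1) by rewrite -ln_1; apply: ln_mono; lra.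
have hp1 : p < 1.
  rewrite /p; have e1 : exp (- t) < 1 by rewrite -exp_0; apply: exp_increasing; lra.
  have e2 : exp (- (ln (INR n1) / INR s)) <= 1.
    rewrite -exp_0; apply: exp_mono; have : 0 <= ln (INR n1) / INR s by apply: Rmult_le_pos; [lra| apply: Rlt_le; apply: Rinv_0_lt_compat; lra].
    lra.
  have := exp_pos (- (ln (INR n1) / INR s)); nra.
have hpw : 1 < p + w by rewrite /p /w -Rmult_plus_distr_l.
have hps : p ^ s = / (2 * INR n1).
  rewrite /p -exp_plus exp_pow_nat.
  have -> : INR s * (- t + - (ln (INR n1) / INR s)) = - (ln 2 + ln (INR n1)) by rewrite /t; field; lra.
  by rewrite -ln_mult; [rewrite exp_Ropp exp_ln //|lra|lra]; lra.
have hws : w ^ s = / (2 * INR n0).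
  rewrite /w -exp_plus exp_pow_nat.
  have -> : INR s * (- t + - (ln (INR n0) / INR s)) = - (ln 2 + ln (INR n0)) by rewrite /t; field; lra.
  by rewrite -ln_mult; [rewrite exp_Ropp exp_ln //|lra|lra]; lra.
set d := w - (1 - p).
have hd : 0 < d by rewrite /d; lra.
have [b [hb1 hb2]] := nat_ceil (/ d) (Rlt_le _ _ (Rinv_0_lt_compat _ hd)).
have hb0 : 0 < INR b by have := Rinv_0_lt_compat _ hd; lra.
have [a [ha1 ha2]] := nat_floor (p * INR b) (Rlt_le _ _ (Rmult_lt_0_compat _ _ hp0 hb0)).
have hab : INR a <= INR b by nra.
have hab' : (a <= b)%N by apply: INR_leq.
apply: (@ub_comb _ _ _ a b); [by apply: INR_ltn; rewrite /=; lra| exact: hab' |].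
apply: INR_ltn; rewrite INR_addn !INR_muln !INR_expn INR_subn //.
have hbd : 1 < INR b * d.
  have := Rinv_0_lt_compat _ hd => ?.
  have : / d * d = 1 by field; lra.
  nra.
have E1 : (INR b - INR a) ^ s < (INR b * w) ^ s.
  apply: pow_lt_strict => //; split; [lra|].
  have : INR b * w = INR b * (1 - p) + INR b * d by rewrite /d; ring.
  nra.
have E2 : INR a ^ s <= (p * INR b) ^ s by apply: pow_incr; have := pos_INR a; lra.
rewrite Rpow_mult_distr hws in E1; rewrite Rpow_mult_distr hps in E2.
have hbs : 0 < INR b ^ s by apply: pow_lt.
have F1 : INR n0 * (INR b - INR a) ^ s < INR b ^ s / 2.
  have e : INR n0 * (INR b ^ s * / (2 * INR n0)) = INR b ^ s / 2 by field; lra.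
  have : INR n0 * (INR b - INR a) ^ s < INR n0 * (INR b ^ s * / (2 * INR n0)).
    by apply: Rmult_lt_compat_l; lra.
  lra.
have F2 : INR n1 * INR a ^ s <= INR b ^ s / 2.
  have e : INR n1 * (/ (2 * INR n1) * INR b ^ s) = INR b ^ s / 2 by field; lra.
  have : INR n1 * INR a ^ s <= INR n1 * (/ (2 * INR n1) * INR b ^ s).
    by apply: Rmult_le_compat_l; lra.
  lra.
lra.
Qed.

Lemma prod_const_ord s c : (\prod_(i < s) c = c ^ s)%N.
Proof. by rewrite big_const_ord iter_muln_1. Qed.

Lemma binom_ratio N s j : (s <= j)%N -> ((j - s) ^ s * 'C(N, s) <= 'C(j, s) * N ^ s)%N.
Proof.
move=> sj.
rewrite -(leq_pmul2r (fact_gt0 s)) -mulnA bin_ffact mulnAC bin_ffact.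
apply: leq_mul.
  rewrite ffact_prod -prod_const_ord; apply: leq_prod => i _.
  apply: leq_sub2l; exact: ltnW (ltn_ord i).
rewrite ffact_prod -prod_const_ord.
apply: leq_prod => i _; exact: leq_subr.
Qed.

Lemma tail_bound (M x nn N : nat) : (0 < M)%N -> (x <= M)%N ->
  2 * INR N <= INR nn * (INR x / INR M) ->
  INR ((M - x) ^ nn) <= INR M ^ nn * exp (- (2 * INR N)).
Proof.
move=> hM hxM H.
have hM' : 0 < INR M by apply: lt_0_INR; apply/ltP.
have hxM' : INR x <= INR M by apply: le_INR; apply/leP.
have hx0 := pos_INR x.
rewrite INR_expn INR_subn //.
apply: Rle_trans (_ : (INR M * exp (- (INR x / INR M))) ^ nn <= _).
  apply: pow_incr; split; first lra.
  have e1 := exp_ineq1_le (- (INR x / INR M)).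
  have : INR M - INR x = INR M * (1 + - (INR x / INR M)) by field; lra.
  move=> ->; apply: Rmult_le_compat_l; lra.
rewrite Rpow_mult_distr exp_pow_nat; apply: Rmult_le_compat_l.
  apply: pow_le; lra.
apply: exp_mono; lra.
Qed.

Lemma ratio_bound (M beta N s j : nat) (A : R) : (s <= j)%N ->
  A * INR N <= INR j - INR s -> 0 <= A -> 0 < INR N -> (0 < M)%N ->
  ((j - s) ^ s * M <= beta * N ^ s)%N -> A ^ s <= INR beta / INR M.
Proof.
move=> sj H hA hN hM Hb.
have hM' : 0 < INR M by apply: lt_0_INR; apply/ltP.
have Hb' : INR ((j - s) ^ s * M) <= INR (beta * N ^ s) by apply: le_INR; apply/leP.
rewrite !INR_muln !INR_expn INR_subn // in Hb'.
have H1 : (A * INR N) ^ s <= (INR j - INR s) ^ s by apply: pow_incr; nra.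
rewrite Rpow_mult_distr in H1.
have hNs : 0 < INR N ^ s by apply: pow_lt.
have hAs : 0 <= A ^ s by apply: pow_le.
apply: (Rmult_le_reg_r (INR M)) => //.
have -> : INR beta / INR M * INR M = INR beta by field; lra.
apply: (Rmult_le_reg_r (INR N ^ s)) => //.
have : A ^ s * INR N ^ s * INR M <= (INR j - INR s) ^ s * INR M.
  by apply: Rmult_le_compat_r; lra.
nra.
Qed.

Lemma final_comb (M X0 X1 n0 n1 N : nat) : (0 < M)%N -> 1 <= INR N ->
  ((INR X0 <= INR M ^ n0 * exp (- (2 * INR N)) /\ INR X1 <= INR M ^ n1) \/
   (INR X0 <= INR M ^ n0 /\ INR X1 <= INR M ^ n1 * exp (- (2 * INR N)))) ->
  (2 ^ N * (X0 * X1) < M ^ (n0 + n1))%N.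
Proof.
move=> hM hN H.
have hM' : 0 < INR M by apply: lt_0_INR; apply/ltP.
apply: INR_ltn; rewrite !INR_muln !INR_expn pow_add.
have h2 : INR 2 ^ N * exp (- (2 * INR N)) < 1.
  have -> : INR 2 = exp (ln 2) by rewrite exp_ln //=; lra.
  rewrite exp_pow_nat -exp_plus -exp_0; apply: exp_increasing.
  have := ln2_bounds; nra.
have p0 : 0 < INR M ^ n0 by apply: pow_lt.
have p1 : 0 < INR M ^ n1 by apply: pow_lt.
have q := pos_INR X0; have q1 := pos_INR X1.
have e := exp_pos (- (2 * INR N)).
have t2 : 0 < INR 2 ^ N by apply: pow_lt; rewrite /=; lra.
have K : INR X0 * INR X1 <= INR M ^ n0 * INR M ^ n1 * exp (- (2 * INR N)).
  case: H => [[a b]|[a b]].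
    apply: Rle_trans (_ : (INR M ^ n0 * exp (- (2 * INR N))) * INR M ^ n1 <= _); last lra.
    apply: Rmult_le_compat => //; nra.
  apply: Rle_trans (_ : INR M ^ n0 * (INR M ^ n1 * exp (- (2 * INR N))) <= _); last lra.
  apply: Rmult_le_compat => //; nra.
have : INR 2 ^ N * (INR X0 * INR X1) <= INR 2 ^ N * (INR M ^ n0 * INR M ^ n1 * exp (- (2 * INR N))).
  by apply: Rmult_le_compat_l; lra.
have : 0 < INR M ^ n0 * INR M ^ n1 by nra.
nra.
Qed.

Lemma lb_real n0 n1 (s N : nat) (A B : R) : (1 <= n0)%N -> (1 <= s)%N -> 1 <= INR N ->
  0 <= A -> 0 <= B ->
  2 * INR N <= INR n1 * A ^ s -> 2 * INR N <= INR n0 * B ^ s ->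
  A + B + 2 * INR s / INR N <= 1 -> ~ choosable (Kbip n0 n1) s.
Proof.
move=> h0 hs hN hA hB HA HB Hsum.
have hs' : 1 <= INR s by apply: (le_INR 1); apply/leP.
have hN0 : 0 < INR N by lra.
have HN2 : A * INR N + B * INR N + 2 * INR s <= INR N.
  have : (A + B + 2 * INR s / INR N) * INR N <= 1 * INR N by apply: Rmult_le_compat_r; lra.
  have -> : (A + B + 2 * INR s / INR N) * INR N = A * INR N + B * INR N + 2 * INR s by field; lra.
  lra.
have hAN : 0 <= A * INR N by nra.
have hBN : 0 <= B * INR N by nra.
have hsN : (s <= N)%N by apply: INR_leq; lra.
have hM : (0 < 'C(N, s))%N by rewrite bin_gt0.
have hM' : 0 < INR 'C(N, s) by apply: lt_0_INR; apply/ltP.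
apply: (@lb_comb n0 n1 s N) => // j hj.
have hj' : INR j <= INR N by apply: le_INR; apply/leP.
have le1 : forall x nn, INR (('C(N, s) - x) ^ nn) <= INR 'C(N, s) ^ nn.
  move=> x nn; rewrite -INR_expn; apply: le_INR; apply/leP; apply: leq_powb; exact: leq_subr.
apply: final_comb => //.
case: (Rle_lt_dec (A * INR N) (INR j - INR s)) => Hc.
  right; split; first exact: le1.
  have sj : (s <= j)%N by apply: INR_leq; lra.
  apply: tail_bound => //; first exact: leq_bin2l.
  have Hr := ratio_bound sj Hc hA hN0 hM (binom_ratio N sj).
  apply: Rle_trans HA _; apply: Rmult_le_compat_l => //; exact: pos_INR.
left; split; last exact: le1.
have hNj : INR (N - j)%N = INR N - INR j by rewrite INR_subn.
have Hc2 : B * INR N <= INR (N - j)%N - INR s by rewrite hNj; lra.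
have sj : (s <= N - j)%N by apply: INR_leq; lra.
apply: tail_bound => //; first exact: leq_bin2l (leq_subr j N).
have Hr := ratio_bound sj Hc2 hB hN0 hM (binom_ratio N sj).
apply: Rle_trans HB _; apply: Rmult_le_compat_l => //; exact: pos_INR.
Qed.


Lemma choosable_mono (V : finType) (e : rel V) k k' :
  choosable e k -> (k <= k')%N -> choosable e k'.
Proof.
move=> H kk S HS; apply: H => v; exact: leq_trans kk (HS v).
Qed.

Lemma ch_spec (V : finType) (e : rel V) k0 : choosable e k0 ->
  choosable e (ch e) /\ forall k', choosable e k' -> (ch e <= k')%N.
Proof.
move=> H0.
have Hex : exists k, is_choice_number e k.
  have [k [[Pk Hk] _]] := dec_inh_nat_subset_has_unique_least_element (choosable e)
     (fun n => classic _) (ex_intro _ k0 H0).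
  exists k; split => // k' Hk'; apply/leP; exact: Hk.
exact: (epsilon_spec (inhabits 0%N) (is_choice_number e) Hex).
Qed.

Definition Cb (eps : R) := 8 / eps + 2 / eps * (1 + 2 * ln (146 / eps)) + 7 / eps + 4.

Lemma x0_facts (n0 n1 : nat) (x0 : R) : (2 <= n0)%N -> (n0 <= n1)%N ->
  (let k := log2 (INR n1) / log2 (INR n0) in 1 <= x0 /\ x0 - 1 - Rpower x0 ((k - 1) / k) = 0) ->
  0 < ln x0 /\ exp (- ln x0) + exp (- (ln x0 * ln (INR n0) / ln (INR n1))) = 1.
Proof.
move=> h2 h01 /= [hx1 hx].
have hn0 : 2 <= INR n0 by apply: (le_INR 2); apply/leP.
have hn01 : INR n0 <= INR n1 by apply: le_INR; apply/leP.
have hl : 0 < ln (INR n0) by rewrite -ln_1; apply: ln_increasing; lra.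
have hlL : ln (INR n0) <= ln (INR n1) by apply: ln_mono; lra.
have hl2 := ln2_bounds.
set l := ln (INR n0) in hl hlL *; set L := ln (INR n1) in hlL *.
have hk : (log2 (INR n1) / log2 (INR n0) - 1) / (log2 (INR n1) / log2 (INR n0)) = 1 - l / L.
  rewrite /log2 -/l -/L; field; lra.
rewrite hk /Rpower in hx.
set z := ln x0 in hx *.
have hx0 : exp z = x0 by rewrite /z exp_ln //; lra.
have E : exp ((1 - l / L) * z) = x0 * exp (- (z * l / L)).
  rewrite -hx0 -exp_plus; congr exp; field; lra.
rewrite E in hx.
have hxz : exp (- z) = / x0 by rewrite exp_Ropp hx0.
have heq : exp (- z) + exp (- (z * l / L)) = 1.
  rewrite hxz; apply: (Rmult_eq_reg_l x0); last lra.
  rewrite Rmult_plus_distr_l Rinv_r; lra.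
split => //.
have hz0 : 0 <= z by rewrite /z -ln_1; apply: ln_mono; lra.
case: (Req_dec z 0) => hz; last lra.
rewrite hz Rmult_0_l /Rdiv Rmult_0_l Ropp_0 exp_0 in heq; lra.
Qed.

Lemma per_m (n0 n1 : nat) (x0 eps : R) :
  (2 <= n0)%N -> (n0 <= n1)%N -> (8 <= n1)%N -> 0 < eps <= 1/2 ->
  (let k := log2 (INR n1) / log2 (INR n0) in 1 <= x0 /\ x0 - 1 - Rpower x0 ((k - 1) / k) = 0) ->
  Cb eps * ln (ln (INR n1) / ln 2) <= ln (INR n0) ->
  Rabs (INR (ch (Kbip n0 n1)) / (log2 (INR n1) / log2 x0) - 1) <= 2 * eps.
Proof.
move=> h2 h01 h8 he H4 Hbig.
have [hz heq] := x0_facts h2 h01 H4.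
have hn0 : 2 <= INR n0 by apply: (le_INR 2); apply/leP.
have hn01 : INR n0 <= INR n1 by apply: le_INR; apply/leP.
have hn8 : 8 <= INR n1.
  have : INR 8 <= INR n1 by apply: le_INR; apply/leP.
  rewrite /=; lra.
have hl : 0 < ln (INR n0) by rewrite -ln_1; apply: ln_increasing; lra.
have hlL : ln (INR n0) <= ln (INR n1) by apply: ln_mono; lra.
have hl2 := ln2_bounds.
have hL3 : 3 * ln 2 <= ln (INR n1).
  have -> : 3 * ln 2 = ln 8.
    have -> : (8 : R) = 2 * (2 * 2) by lra.
    rewrite !ln_mult; lra.
  apply: ln_mono; lra.
set l := ln (INR n0) in hl hlL heq Hbig *.
set L := ln (INR n1) in hlL heq Hbig hL3 *.
set z := ln x0 in hz heq *.
set lam := ln (L / ln 2) in Hbig.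
have hL1 : 1 <= L by lra.
have hlam : 1 <= lam.
  rewrite /lam -(ln_exp 1); apply: ln_mono; first exact: exp_pos.
  have := exp_le_3; have : 3 <= L / ln 2.
    apply: (Rmult_le_reg_r (ln 2)); first lra.
    rewrite /Rdiv Rmult_assoc Rinv_l; lra.
  lra.
have hLlam : ln L <= lam.
  rewrite /lam; apply: ln_mono; first lra.
  apply: (Rmult_le_reg_r (ln 2)); first lra.
  rewrite /Rdiv Rmult_assoc Rinv_l; nra.
have hlnL0 : 0 <= ln L by rewrite -ln_1; apply: ln_mono; lra.
have hln146 : 0 <= ln (146 / eps).
  rewrite -ln_1; apply: ln_mono; first lra.
  apply: (Rmult_le_reg_r eps); first lra.
  rewrite /Rdiv Rmult_assoc Rinv_l; lra.
have hCe : eps * Cb eps = 8 + 2 * (1 + 2 * ln (146 / eps)) + 7 + 4 * eps.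
  rewrite /Cb; field; lra.
have hC0 : 18 <= Cb eps.
  have : 7 / eps >= 14.
    apply: Rle_ge; apply: (Rmult_le_reg_r eps); first lra.
    rewrite /Rdiv Rmult_assoc Rinv_l; lra.
  have : 0 <= 8 / eps + 2 / eps * (1 + 2 * ln (146 / eps)).
    have : 0 < / eps by apply: Rinv_0_lt_compat; lra.
    rewrite /Rdiv; nra.
  rewrite /Cb; lra.
have hlc : Cb eps <= l.
  have : Cb eps * 1 <= Cb eps * lam by apply: Rmult_le_compat_l; lra.
  lra.
have hel : 6 < eps * l.
  have : eps * Cb eps <= eps * l by apply: Rmult_le_compat_l; lra.
  rewrite hCe; lra.
have hbigLB : 1 + 2 * ln (146 / eps) + 4 * ln L <= eps * l.
  have : eps * Cb eps * lam <= eps * l.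
    rewrite Rmult_assoc; apply: Rmult_le_compat_l; lra.
  rewrite hCe => H1.
  have : (1 + 2 * ln (146 / eps)) * 1 <= (1 + 2 * ln (146 / eps)) * lam.
    by apply: Rmult_le_compat_l; lra.
  have : 0 <= (7 + 4 * eps) * lam by apply: Rmult_le_pos; lra.
  lra.
have hez := expz_le l L z hl hlL hz heq.
have hezL : exp z <= L.
  apply: Rle_trans hez _; apply: (Rmult_le_reg_r l); first lra.
  rewrite /Rdiv Rmult_assoc Rinv_l; last lra.
  have : L * 3 <= L * l by apply: Rmult_le_compat_l; lra.
  lra.
have hzlam : z <= lam.
  have : z <= ln L by rewrite -(ln_exp z); apply: ln_mono => //; exact: exp_pos.
  lra.
set R := L / z.
have hR : Cb eps <= R.
  rewrite /R; apply: (Rmult_le_reg_r z) => //.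
  rewrite /Rdiv Rmult_assoc Rinv_l; last lra.
  have : Cb eps * z <= Cb eps * lam by apply: Rmult_le_compat_l; lra.
  lra.
have hReps : 1 <= eps * R.
  have : eps * Cb eps <= eps * R by apply: Rmult_le_compat_l; lra.
  lra.
have hR9 : 9 <= (1 - eps) * R.
  have : 1/2 * R <= (1 - eps) * R by apply: Rmult_le_compat_r; lra.
  lra.
have [su [hsu1 hsu2]] : exists n : nat, (1 + eps) * R < INR n <= (1 + eps) * R + 1.
  apply: nat_ceil; lra.
have hsu2' : 2 <= INR su by lra.
have hub := ub_analytic l L z eps (INR su) hl hlL hz heq ltac:(lra) hsu2' ltac:(rewrite -/R; lra) hel.
have hsu0 : (1 <= su)%N by apply: INR_leq; rewrite /=; lra.
have Cu : choosable (Kbip n0 n1) su.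
  apply: ub_real => //; [exact: leq_trans h2| exact: leq_trans (leq_trans h2 h01)].
have [chs chmin] := ch_spec Cu.
have Hup : INR (ch (Kbip n0 n1)) <= INR su by apply: le_INR; apply/leP; exact: chmin.
have [sl [hsl1 hsl2]] : exists n : nat, INR n <= (1 - eps) * R < INR n + 1.
  apply: nat_floor; lra.
have hsl0 : (1 <= sl)%N by apply: INR_ltn; rewrite /=; lra.
have hsl1' : 1 <= INR sl by apply: (le_INR 1); apply/leP.
have [N [hN1 hNs]] := lb_analytic l L z eps (INR sl) hl hlL hz heq he hL1 hsl1'
  ltac:(rewrite -/R; lra) ltac:(rewrite -/R; lra) hbigLB.
have hsl' : 0 < INR sl by lra.
have nC : ~ choosable (Kbip n0 n1) sl.
  apply: (@lb_real n0 n1 sl N (exp ((ln (2 * INR N) - L) / INR sl))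
            (exp ((ln (2 * INR N) - l) / INR sl))) => //.
  - exact: leq_trans h2.
  - exact: Rlt_le (exp_pos _).
  - exact: Rlt_le (exp_pos _).
  - rewrite exp_pow_nat.
    have -> : INR sl * ((ln (2 * INR N) - L) / INR sl) = ln (2 * INR N) + - L by field; lra.
    rewrite exp_plus exp_ln; last lra.
    rewrite exp_Ropp /L exp_ln; last lra.
    have : INR n1 * (2 * INR N * / INR n1) = 2 * INR N by field; lra.
    lra.
  - rewrite exp_pow_nat.
    have -> : INR sl * ((ln (2 * INR N) - l) / INR sl) = ln (2 * INR N) + - l by field; lra.
    rewrite exp_plus exp_ln; last lra.
    rewrite exp_Ropp /l exp_ln; last lra.
    have : INR n0 * (2 * INR N * / INR n0) = 2 * INR N by field; lra.
    lra.
have Hlo : INR sl + 1 <= INR (ch (Kbip n0 n1)).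
  have : (sl < ch (Kbip n0 n1))%N.
    rewrite ltnNge; apply/negP => hle; apply: nC; exact: choosable_mono chs hle.
  move/leP/le_INR; rewrite S_INR; lra.
have -> : log2 (INR n1) / log2 x0 = R by rewrite /R /log2 -/L -/z; field; lra.
have hR0 : 0 < R by lra.
apply: Rabs_le; split.
  apply: (Rmult_le_reg_r R) => //.
  have -> : (INR (ch (Kbip n0 n1)) / R - 1) * R = INR (ch (Kbip n0 n1)) - R by field; lra.
  lra.
apply: (Rmult_le_reg_r R) => //.
have -> : (INR (ch (Kbip n0 n1)) / R - 1) * R = INR (ch (Kbip n0 n1)) - R by field; lra.
lra.
Qed.

Lemma hyp_conv (n0 n1 : nat) c : (8 <= n1)%N ->
  c <= log2 (INR n0) / log2 (log2 (INR n1)) -> c * ln (ln (INR n1) / ln 2) <= ln (INR n0).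
Proof.
move=> h8 H.
have hn8 : 8 <= INR n1.
  have : INR 8 <= INR n1 by apply: le_INR; apply/leP.
  rewrite /=; lra.
have hl2 := ln2_bounds.
have hL3 : 3 * ln 2 <= ln (INR n1).
  have -> : 3 * ln 2 = ln 8.
    have -> : (8 : R) = 2 * (2 * 2) by lra.
    rewrite !ln_mult; lra.
  apply: ln_mono; lra.
have hq : 1 < ln (INR n1) / ln 2.
  apply: (Rmult_lt_reg_r (ln 2)); first lra.
  rewrite /Rdiv Rmult_assoc Rinv_l; lra.
have hlam : 0 < ln (ln (INR n1) / ln 2) by rewrite -ln_1; apply: ln_increasing; lra.
have E : log2 (INR n0) / log2 (log2 (INR n1)) = ln (INR n0) / ln (ln (INR n1) / ln 2).
  rewrite /log2; field; lra.
rewrite E in H.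
apply: Rle_trans (_ : ln (INR n0) / ln (ln (INR n1) / ln 2) * ln (ln (INR n1) / ln 2) <= _).
  by apply: Rmult_le_compat_r; lra.
right; field; lra.
Qed.


From mathcomp Require Import all_boot.
From Stdlib Require Import Reals.
Open Scope R_scope.

Theorem theorem1 (n0 n1 : nat -> nat) (x0 : nat -> R) :
  (forall m, is_true (leq 2 (n0 m)) /\ is_true (leq (n0 m) (n1 m))) ->
  (forall M : nat, exists N : nat, forall m, is_true (leq N m) -> is_true (leq M (n1 m))) ->
  (forall M : R, exists N : nat, forall m, is_true (leq N m) ->
       M <= log2 (INR (n0 m)) / log2 (log2 (INR (n1 m)))) ->
  (forall m,
     let k := log2 (INR (n1 m)) / log2 (INR (n0 m)) in
     1 <= x0 m /\ x0 m - 1 - Rpower (x0 m) ((k - 1) / k) = 0) ->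
  Un_cv (fun m => INR (ch (Kbip (n0 m) (n1 m)))
                  / (log2 (INR (n1 m)) / log2 (x0 m))) 1.
Proof.
move=> H1 H2 H3 H4 eps heps.
set e := Rmin (eps / 3) (1 / 2).
have he : 0 < e <= 1 / 2.
  rewrite /e; split; [apply: Rmin_pos; lra| exact: Rmin_r].
have he2 : 2 * e < eps by have := Rmin_l (eps / 3) (1 / 2); rewrite -/e; lra.
have [Na HNa] := H2 8%nat.
have [Nb HNb] := H3 (Cb e).
exists (maxn Na Nb) => m hm.
have hm' : is_true (leq (maxn Na Nb) m) by apply/leP.
have h8 : is_true (leq 8%nat (n1 m)) by apply: HNa; exact: leq_trans (leq_maxl _ _) hm'.
have hb := HNb m (leq_trans (leq_maxr _ _) hm').
have [h2 h01] := H1 m.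
have := per_m h2 h01 h8 he (H4 m) (hyp_conv h8 hb).
rewrite /R_dist; lra.
Qed.
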